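(* Let $\Gamma\subseteq A$ be $\Bbbk$-algebras, $\sim$ an equivalence relation on $\mathrm{cfs}(\Gamma)$, with $\Gamma$ a strong Harish-Chandra block subalgebra of $A$ with respect to $\sim$. For $B,C,D\in\mathrm{cfs}(\Gamma)/{\sim}$, the composition rule described in the context yields a well-defined (independent of all choices) $(\Gamma,\Gamma)$-bimodule map $\mathcal A(C,D)\otimes_\Gamma\mathcal A(B,C)\to\mathcal A(B,D)$; it is associative, satisfies $\gamma.\alpha=(\gamma)\circ\alpha$ and $\alpha.\gamma=\alpha\circ(\gamma)$ for $\gamma\in\Gamma$, and makes $\mathcal A$ a category with identity morphisms $(1)\in\mathcal A(B,B)$.
   Context: $\mathrm{cfs}(\Gamma)$: maximal two-sided ideals $\mathfrak m$ with $\dim\Gamma/\mathfrak m<\infty$. For a class $B$, $\mathcal W(B)=\{\mathfrak m_1\cdots\mathfrak m_k:k\ge0,\mathfrak m_i\in B\}$. For a left $\Gamma$-module $V$, $V(B)=\{v:\mathfrak mv=0$ for some $\mathfrak m\in\mathcal W(B)\}$, and for a right module $V(B)=\{v:v\mathfrak m=0$ for some $\mathfrak m\in\mathcal W(B)\}$; $V$ is a strong block module if $V=\bigoplus_BV(B)$ and each $V(B)$ is killed by some $\mathfrak m\in\mathcal W(B)$. $\Gamma$ is a strong Harish-Chandra block subalgebra of $A$ if for all $B$, $\mathfrak m\in\mathcal W(B)$, the left module $A/A\mathfrak m$ and right module $A/\mathfrak mA$ are strong block modules. $\mathcal A(B,C)=\varprojlim_{\mathfrak n\in\mathcal W(C),\mathfrak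 m\in\mathcal W(B)}A/(\mathfrak nA+A\mathfrak m)$; for $\alpha\in\mathcal A(B,C)$, $\alpha_{\mathfrak m,\mathfrak n}$ is its image in $A/(\mathfrak nA+A\mathfrak m)$, and $(a)$ is the image of $a\in A$. Composition: for $\mathfrak m\in\mathcal W(B)$, $\mathfrak l\in\mathcal W(D)$, choose $\mathfrak n\in\mathcal W(C)$ such that the natural maps give bimodule isomorphisms $A/(\mathfrak lA+A\mathfrak n)\cong(A/\mathfrak lA)(C)$ and $A/(\mathfrak nA+A\mathfrak m)\cong(A/A\mathfrak m)(C)$ (such $\mathfrak n$ exists); given $\alpha\in\mathcal A(B,C)$, $\beta\in\mathcal A(C,D)$ choose $a_0,b_0\in A$ with $\alpha_{\mathfrak m,\mathfrak n}=a_0+\mathfrak nA+A\mathfrak m$, $a_0+A\mathfrak m\in(A/A\mathfrak m)(C)$, $\beta_{\mathfrak n,\mathfrak l}=b_0+\mathfrak lA+A\mathfrak n$, $b_0+\mathfrak lA\in(A/\mathfrak lA)(C)$, and define $(\beta\circ\alpha)_{\mathfrak m,\mathfrak l}=b_0a_0+\mathfrak lA+A\mathfrak m$. *)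

(* Defs.v *)
(* Harish-Chandra block subalgebras: the category A of
   completed morphism spaces.  Subsets of A are Prop-valued predicates;
   equality of subsets is Leibniz equality (funext/propext are available). *)
From HB Require Import structures.
From mathcomp Require Import all_boot all_order all_algebra.
Set Implicit Arguments. Unset Strict Implicit. Unset Printing Implicit Defensive.
Import GRing.Theory.
Local Open Scope ring_scope.

Section HC.
Variables (k : fieldType) (A : algType k).
Local Notation pset := (A -> Prop).

Definition psubset (P Q : pset) := forall x, P x -> Q x.

Definition is_subalg (G : pset) :=
  [/\ G 1, (forall x y, G x -> G y -> G (x + y)), (forall x, G x -> G (- x)),
      (forall x y, G x -> G y -> G (x * y)) & (forall (c : k) x, G x -> G (c *: x))].

Definition is_ideal (G m : pset) :=
  psubset m G /\ m 0 /\ (forall x y, m x -> m y -> m (x + y)) /\ (forall x, m x -> m (- x)) /\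
      (forall g x, G g -> m x -> m (g * x)) /\ (forall g x, G g -> m x -> m (x * g)).

Definition is_max_ideal (G m : pset) :=
  [/\ is_ideal G m, m <> G &
      forall J, is_ideal G J -> psubset m J -> J = m \/ J = G].

(* dim_k Gamma/m < oo : finitely many elements of Gamma span Gamma modulo m *)
Definition fin_codim (G m : pset) :=
  exists (n : nat) (v : 'I_n -> A), (forall i, G (v i)) /\
    forall g, G g -> exists c : 'I_n -> k, m (g - \sum_(i < n) c i *: v i).

Definition cfs (G m : pset) := is_max_ideal G m /\ fin_codim G m.

Definition equiv_on_cfs (G : pset) (R : pset -> pset -> Prop) :=
  [/\ (forall m, cfs G m -> R m m),
      (forall m n, cfs G m -> cfs G n -> R m n -> R n m) &
      (forall m n p, cfs G m -> cfs G n -> cfs G p -> R m n -> R n p -> R m p)].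

Definition is_class (G : pset) (R : pset -> pset -> Prop) (B : pset -> Prop) :=
  exists m0, cfs G m0 /\ B = (fun m => cfs G m /\ R m m0).

Definition sum_prods (P Q : pset) : pset := fun z =>
  exists (r : nat) (x y : 'I_r -> A),
    (forall i, P (x i) /\ Q (y i)) /\ z = \sum_(i < r) x i * y i.

Definition ideal_prod (G : pset) (ms : seq pset) : pset := foldr sum_prods G ms.

Definition inW (G : pset) (B : pset -> Prop) (m : pset) :=
  exists ms : seq pset, foldr (fun m0 P => B m0 /\ P) True ms /\ m = ideal_prod G ms.

Definition lgen (m : pset) : pset := sum_prods (fun _ => True) m.
Definition rgen (m : pset) : pset := sum_prods m (fun _ => True).

Definition Qmod (m n : pset) : pset := fun z =>
  exists u v, rgen n u /\ lgen m v /\ z = u + v.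

(* For the quotient A/K with Gamma acting by act (act x a = x*a for a left
   module, a*x for a right module): preimage in A of V(B). *)
Definition Vblk (G : pset) (act : A -> A -> A) (K : pset) (B : pset -> Prop) : pset :=
  fun a => exists n, inW G B n /\ forall x, n x -> K (act x a).

(* A/K is a strong block module: A/K = (+)_B V(B) (internal direct sum over
   the classes B) and each V(B) is killed by some element of W(B). *)
Definition strong_block (G : pset) (R : pset -> pset -> Prop) (act : A -> A -> A) (K : pset) :=
  [/\ (forall a, exists (r : nat) (Bs : 'I_r -> pset -> Prop) (v : 'I_r -> A),
          (forall i, is_class G R (Bs i) /\ Vblk G act K (Bs i) (v i)) /\
          K (a - \sum_(i < r) v i)),
      (forall (r : nat) (Bs : 'I_r -> pset -> Prop) (v : 'I_r -> A), injective Bs ->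
          (forall i, is_class G R (Bs i) /\ Vblk G act K (Bs i) (v i)) ->
          K (\sum_(i < r) v i) -> forall i, K (v i)) &
      (forall B, is_class G R B -> exists n, inW G B n /\
          forall a, Vblk G act K B a -> forall x, n x -> K (act x a))].

Definition lact : A -> A -> A := fun x a => x * a.
Definition ract : A -> A -> A := fun x a => a * x.

Definition strong_HC (G : pset) (R : pset -> pset -> Prop) :=
  forall B, is_class G R B -> forall m, inW G B m ->
    strong_block G R lact (lgen m) /\ strong_block G R ract (rgen m).

(* Elements of A(B,C) = lim_{n in W(C), m in W(B)} A/(nA + Am), W ordered by
   inclusion: f m n is a representative of the component alpha_{m,n}. *)
Definition hcfam := pset -> pset -> A.

Definition in_lim (G : pset) (B C : pset -> Prop) (f : hcfam) :=
  forall m m' n n', inW G B m -> inW G B m' -> inW G C n -> inW G C n' ->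
    psubset m' m -> psubset n' n -> Qmod m n (f m' n' - f m n).

Definition lim_eq (G : pset) (B C : pset -> Prop) (f g : hcfam) :=
  forall m n, inW G B m -> inW G C n -> Qmod m n (f m n - g m n).

Definition fam_add (f g : hcfam) : hcfam := fun m n => f m n + g m n.
Definition fam_lmul (c : A) (f : hcfam) : hcfam := fun m n => c * f m n.
Definition fam_rmul (f : hcfam) (c : A) : hcfam := fun m n => f m n * c.
Definition fam_cst (a : A) : hcfam := fun _ _ => a.

(* the map (A/lA)(C) -> A/(lA + An) is bijective *)
Definition proj_bij_right (G : pset) (C : pset -> Prop) (l n : pset) :=
  (forall a, exists b, Vblk G ract (rgen l) C b /\ Qmod n l (a - b)) /\
  (forall b, Vblk G ract (rgen l) C b -> Qmod n l b -> rgen l b).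

(* the map (A/Am)(C) -> A/(nA + Am) is bijective *)
Definition proj_bij_left (G : pset) (C : pset -> Prop) (m n : pset) :=
  (forall a, exists b, Vblk G lact (lgen m) C b /\ Qmod m n (a - b)) /\
  (forall b, Vblk G lact (lgen m) C b -> Qmod m n b -> lgen m b).

(* an admissible choice (n, a0, b0) in the composition rule, for
   alpha = f in A(B,C), beta = g in A(C,D), m in W(B), l in W(D) *)
Definition admissible (G : pset) (C : pset -> Prop) (f g : hcfam)
    (m l n : pset) (a0 b0 : A) :=
  [/\ inW G C n, proj_bij_right G C l n, proj_bij_left G C m n,
      Qmod m n (f m n - a0) /\ Vblk G lact (lgen m) C a0 &
      Qmod n l (g n l - b0) /\ Vblk G ract (rgen l) C b0].

(* h = g o f according to the composition rule: admissible choices exist,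
   and for EVERY admissible choice h_{m,l} = b0 a0 + lA + Am *)
Definition comp_spec (G : pset) (B C D : pset -> Prop) (f g h : hcfam) :=
  forall m l, inW G B m -> inW G D l ->
    (exists n a0 b0, admissible G C f g m l n a0 b0) /\
    (forall n a0 b0, admissible G C f g m l n a0 b0 -> Qmod m l (h m l - b0 * a0)).

End HC.

(* Main.v *)
Require Import Defs.
From HB Require Import structures.
From mathcomp Require Import all_boot all_order all_algebra.
From Stdlib Require Import Classical ClassicalEpsilon FunctionalExtensionality PropExtensionality.
Set Implicit Arguments. Unset Strict Implicit. Unset Printing Implicit Defensive.
Import GRing.Theory.
Local Open Scope ring_scope.

Section Basic.
Variables (k : fieldType) (A : algType k).
Local Notation pset := (A -> Prop).

Lemma sp0 (P Q : pset) : sum_prods P Q 0.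
Proof. exists 0%N, (fun _ => 0), (fun _ => 0); split; first by case.
by rewrite big_ord0. Qed.

Lemma sp1 (P Q : pset) x y : P x -> Q y -> sum_prods P Q (x * y).
Proof. move=> Px Qy; exists 1%N, (fun _ => x), (fun _ => y); split=> //.
by rewrite big_ord1. Qed.

Lemma spD (P Q : pset) a b : sum_prods P Q a -> sum_prods P Q b -> sum_prods P Q (a + b).
Proof.
move=> [r1 [x1 [y1 [H1 ->]]]] [r2 [x2 [y2 [H2 ->]]]].
exists (r1 + r2)%N,
  (fun i => match split i with inl j => x1 j | inr j => x2 j end),
  (fun i => match split i with inl j => y1 j | inr j => y2 j end).
split.
  by move=> i; case: (split i).
rewrite big_split_ord /=; congr (_ + _); apply: eq_bigr => i _.
  by rewrite (unsplitK (inl i)).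
by rewrite (unsplitK (inr i)).
Qed.

Lemma sp_ind (P Q S : pset) : S 0 -> (forall a b, S a -> S b -> S (a + b)) ->
  (forall x y, P x -> Q y -> S (x * y)) -> forall z, sum_prods P Q z -> S z.
Proof.
move=> S0 SD Sxy z [r [x [y [H ->]]]].
apply: (big_ind S) => // i _; by case: (H i) => ??; apply: Sxy.
Qed.

Lemma sp_mono (P Q P' Q' : pset) : psubset P P' -> psubset Q Q' ->
  psubset (sum_prods P Q) (sum_prods P' Q').
Proof.
move=> HP HQ z; apply: sp_ind; [exact: sp0 | exact: spD |].
by move=> x y /HP Px /HQ Qy; apply: sp1.
Qed.

Lemma lgen0 (m : pset) : lgen m 0. Proof. exact: sp0. Qed.
Lemma rgen0 (m : pset) : rgen m 0. Proof. exact: sp0. Qed.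
Lemma lgenD (m : pset) a b : lgen m a -> lgen m b -> lgen m (a + b). Proof. exact: spD. Qed.
Lemma rgenD (m : pset) a b : rgen m a -> rgen m b -> rgen m (a + b). Proof. exact: spD. Qed.
Lemma lgenM (m : pset) c a : lgen m a -> lgen m (c * a).
Proof.
move: a; apply: sp_ind; first by rewrite mulr0; apply: lgen0.
  by move=> a b Ha Hb; rewrite mulrDr; apply: lgenD.
by move=> x y _ Hy; rewrite mulrA; apply: sp1.
Qed.
Lemma rgenM (m : pset) c a : rgen m a -> rgen m (a * c).
Proof.
move: a; apply: sp_ind; first by rewrite mul0r; apply: rgen0.
  by move=> a b Ha Hb; rewrite mulrDl; apply: rgenD.
by move=> x y Hx _; rewrite -mulrA; apply: sp1.
Qed.
Lemma lgenN (m : pset) a : lgen m a -> lgen m (- a).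
Proof. by move=> H; rewrite -mulN1r; apply: lgenM. Qed.
Lemma rgenN (m : pset) a : rgen m a -> rgen m (- a).
Proof. by move=> H; rewrite -mulrN1; apply: rgenM. Qed.
Lemma lgen_in (m : pset) x : m x -> lgen m x.
Proof. by move=> H; rewrite -(mul1r x); apply: sp1. Qed.
Lemma rgen_in (m : pset) x : m x -> rgen m x.
Proof. by move=> H; rewrite -(mulr1 x); apply: sp1. Qed.
Lemma lgen1 (m : pset) a x : m x -> lgen m (a * x). Proof. by move=> H; apply: sp1. Qed.
Lemma rgen1 (m : pset) a x : m x -> rgen m (x * a). Proof. by move=> H; apply: sp1. Qed.
Lemma lgen_mono (m : pset) m' : psubset m m' -> psubset (lgen m) (lgen m').
Proof. by move=> H; apply: sp_mono. Qed.
Lemma rgen_mono (m : pset) m' : psubset m m' -> psubset (rgen m) (rgen m').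
Proof. by move=> H; apply: sp_mono. Qed.

End Basic.

Section Ideals.
Variables (k : fieldType) (A : algType k).
Local Notation pset := (A -> Prop).
Variable G : pset.
Hypothesis HG : is_subalg G.

Lemma G1 : G 1. Proof. by case: HG. Qed.
Lemma GD x y : G x -> G y -> G (x + y). Proof. by case: HG => _ H *; apply: H. Qed.
Lemma GN x : G x -> G (- x). Proof. by case: HG => _ _ H *; apply: H. Qed.
Lemma GM x y : G x -> G y -> G (x * y). Proof. by case: HG => _ _ _ H *; apply: H. Qed.
Lemma G0 : G 0. Proof. by rewrite -(subrr (1 : A)); apply: GD; [apply: G1| apply: GN; apply: G1]. Qed.
Lemma GB x y : G x -> G y -> G (x - y). Proof. by move=> *; apply: GD => //; apply: GN. Qed.

Lemma ideal_G : is_ideal G G.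
Proof.
split; first by [].
split; first exact: G0.
split; first exact: GD. split; first exact: GN.
by split; move=> *; apply: GM.
Qed.

Section I.
Variables I : pset.
Hypothesis HI : is_ideal G I.
Lemma I_sub x : I x -> G x. Proof. by case: HI => H _; apply: H. Qed.
Lemma I0 : I 0. Proof. by case: HI => _ []. Qed.
Lemma ID x y : I x -> I y -> I (x + y). Proof. by case: HI => _ [_ [H _]]; apply: H. Qed.
Lemma IN x : I x -> I (- x). Proof. by case: HI => _ [_ [_ [H _]]]; apply: H. Qed.
Lemma IB x y : I x -> I y -> I (x - y). Proof. by move=> *; apply: ID => //; apply: IN. Qed.
Lemma IMl g x : G g -> I x -> I (g * x). Proof. by case: HI => _ [_ [_ [_ [H _]]]]; apply: H. Qed.
Lemma IMr g x : G g -> I x -> I (x * g). Proof. by case: HI => _ [_ [_ [_ [_ H]]]]; apply: H. Qed.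

Lemma rgenMG c a : G c -> rgen I a -> rgen I (c * a).
Proof.
move=> Gc; move: a; apply: sp_ind; first by rewrite mulr0; apply: rgen0.
  by move=> a b Ha Hb; rewrite mulrDr; apply: rgenD.
by move=> x y Hx _; rewrite mulrA; apply: sp1 => //; apply: IMl.
Qed.
Lemma lgenMG c a : G c -> lgen I a -> lgen I (a * c).
Proof.
move=> Gc; move: a; apply: sp_ind; first by rewrite mul0r; apply: lgen0.
  by move=> a b Ha Hb; rewrite mulrDl; apply: lgenD.
by move=> x y _ Hy; rewrite -mulrA; apply: sp1 => //; apply: IMr.
Qed.
End I.

Lemma sp_sub_l (I J : pset) : is_ideal G I -> psubset J G -> psubset (sum_prods I J) I.
Proof.
move=> HI HJ z; apply: sp_ind; [exact: I0 | exact: ID |].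
by move=> x y Ix Jy; apply: IMr => //; apply: HJ.
Qed.
Lemma sp_sub_r (I J : pset) : psubset I G -> is_ideal G J -> psubset (sum_prods I J) J.
Proof.
move=> HI HJ z; apply: sp_ind; [exact: I0 | exact: ID |].
by move=> x y Ix Jy; apply: IMl => //; apply: HI.
Qed.

Lemma sp_ideal (I J : pset) : is_ideal G I -> is_ideal G J -> is_ideal G (sum_prods I J).
Proof.
move=> HI HJ.
split.
  move=> z; apply: sp_ind; [exact: G0 | exact: GD |].
  by move=> x y Ix Jy; apply: GM; [apply: (I_sub HI) | apply: (I_sub HJ)].
split; first exact: sp0.
split; first by move=> *; apply: spD.
split.
  move=> z; apply: (sp_ind (S := fun z => sum_prods I J (- z))); first by rewrite oppr0; apply: sp0.
    by move=> a b Ha Hb; rewrite opprD; apply: spD.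
  by move=> x y Ix Jy; rewrite -mulNr; apply: sp1 => //; apply: IN.
split.
  move=> g z Gg; apply: (sp_ind (S := fun z => sum_prods I J (g * z))); first by rewrite mulr0; apply: sp0.
    by move=> a b Ha Hb; rewrite mulrDr; apply: spD.
  by move=> x y Ix Jy; rewrite mulrA; apply: sp1 => //; apply: IMl.
move=> g z Gg; apply: (sp_ind (S := fun z => sum_prods I J (z * g))); first by rewrite mul0r; apply: sp0.
  by move=> a b Ha Hb; rewrite mulrDl; apply: spD.
by move=> x y Ix Jy; rewrite -mulrA; apply: sp1 => //; apply: IMr.
Qed.

Definition allP (C : pset -> Prop) (ms : seq pset) := foldr (fun m0 P => C m0 /\ P) True ms.

Lemma allP_cat C ms1 ms2 : allP C ms1 -> allP C ms2 -> allP C (ms1 ++ ms2).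
Proof. by elim: ms1 => //= m ms IH [? ?] ?; split => //; apply: IH. Qed.

Lemma ideal_prod_ideal (C : pset -> Prop) ms :
  (forall m, C m -> is_ideal G m) -> allP C ms -> is_ideal G (ideal_prod G ms).
Proof.
move=> HC; elim: ms => [|m ms IH] /=; first by move=> _; apply: ideal_G.
by move=> [Cm H]; apply: sp_ideal; [apply: HC | apply: IH].
Qed.

Lemma foldr_mono (Y Z : pset) ms : psubset Y Z ->
  psubset (foldr (@sum_prods _ A) Y ms) (foldr (@sum_prods _ A) Z ms).
Proof.
elim: ms => [|m ms IH] //= H; apply: sp_mono => //; exact: IH.
Qed.

Lemma foldr_sub (C : pset -> Prop) (Y : pset) ms : (forall m, C m -> is_ideal G m) ->
  allP C ms -> is_ideal G Y -> psubset (foldr (@sum_prods _ A) Y ms) Y.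
Proof.
move=> HC; elim: ms => [|m ms IH] /=; first by move=> _ _ z.
move=> [Cm H] HY z Hz.
apply: (sp_sub_r (I_sub (HC _ Cm)) HY).
by apply: (sp_mono (P' := m) _ (IH H HY)) Hz.
Qed.

Variable R : pset -> pset -> Prop.
Hypothesis HR : equiv_on_cfs G R.

Lemma class_cfs (C : pset -> Prop) m : is_class G R C -> C m -> cfs G m.
Proof. by move=> [m0 [_ ->]] []. Qed.

Lemma class_ideal (C : pset -> Prop) m : is_class G R C -> C m -> is_ideal G m.
Proof. by move=> HC Cm; case: (class_cfs HC Cm) => [[]]. Qed.

Lemma inW_ideal (C : pset -> Prop) n : is_class G R C -> inW G C n -> is_ideal G n.
Proof.
move=> HC [ms [Hms ->]]; apply: (ideal_prod_ideal (C := C)) => //.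
by move=> m; apply: class_ideal.
Qed.

Lemma inW_G (C : pset -> Prop) : inW G C G.
Proof. by exists [::]. Qed.

Lemma meetW (C : pset -> Prop) n1 n2 : is_class G R C -> inW G C n1 -> inW G C n2 ->
  exists N, [/\ inW G C N, psubset N n1 & psubset N n2].
Proof.
move=> HC [ms1 [H1 ->]] [ms2 [H2 ->]].
have HCi : forall m, C m -> is_ideal G m by move=> m; apply: class_ideal.
exists (ideal_prod G (ms1 ++ ms2)); split.
- by exists (ms1 ++ ms2); split => //; apply: allP_cat.
- rewrite /ideal_prod foldr_cat; apply: foldr_mono.
  exact: (I_sub (ideal_prod_ideal HCi H2)).
- rewrite /ideal_prod foldr_cat; apply: (foldr_sub HCi H1).
  exact: (ideal_prod_ideal HCi H2).
Qed.

Lemma class_eq (B C : pset -> Prop) m : is_class G R B -> is_class G R C -> B m -> C m -> B = C.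
Proof.
case: HR => Rr Rs Rt.
move=> [b0 [Hb0 EB]] [c0 [Hc0 EC]]; rewrite EB EC => -[Hm Rmb] [_ Rmc].
apply: functional_extensionality => x; apply: propositional_extensionality.
split=> -[Hx Rx]; split => //.
- apply: (Rt _ _ _ Hx Hm Hc0) => //; apply: (Rt _ _ _ Hx Hb0 Hm) => //; exact: Rs.
- apply: (Rt _ _ _ Hx Hm Hb0) => //; apply: (Rt _ _ _ Hx Hc0 Hm) => //; exact: Rs.
Qed.

Definition comax (P Q : pset) := exists x y, [/\ P x, Q y & x + y = 1].

Lemma comax_sym P Q : comax P Q -> comax Q P.
Proof. by move=> [x [y [Px Qy E]]]; exists y, x; split => //; rewrite addrC. Qed.

Lemma comax_max (B C : pset -> Prop) m1 m2 : is_class G R B -> is_class G R C -> B <> C ->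
  B m1 -> C m2 -> comax m1 m2.
Proof.
move=> HB HC BC Bm1 Cm2.
have [[I1 ne1 max1] _] := class_cfs HB Bm1.
have [[I2 ne2 max2] _] := class_cfs HC Cm2.
have ne : m1 <> m2 by move=> E; apply: BC; apply: (class_eq HB HC Bm1); rewrite E.
pose S := fun z => exists x y, [/\ m1 x, m2 y & z = x + y].
have IS : is_ideal G S.
  split.
    by move=> z [x [y [? ? ->]]]; apply: GD; [apply: (I_sub I1) | apply: (I_sub I2)].
  split; first by exists 0, 0; split; rewrite ?addr0 //; apply: I0.
  split.
    move=> z1 z2 [x1 [y1 [? ? ->]]] [x2 [y2 [? ? ->]]]; exists (x1 + x2), (y1 + y2).
    by split; [apply: ID | apply: ID | rewrite addrACA].
  split.
    move=> z [x [y [? ? ->]]]; exists (- x), (- y).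
    by split; [apply: IN | apply: IN | rewrite opprD].
  split.
    move=> g z Gg [x [y [? ? ->]]]; exists (g * x), (g * y).
    by split; [apply: IMl | apply: IMl | rewrite mulrDr].
  move=> g z Gg [x [y [? ? ->]]]; exists (x * g), (y * g).
  by split; [apply: IMr | apply: IMr | rewrite mulrDl].
have sub1 : psubset m1 S by move=> x Hx; exists x, 0; split; rewrite ?addr0 //; apply: I0.
case: (max1 S IS sub1) => ES.
  have sub2 : psubset m2 m1.
    by move=> y Hy; rewrite -ES; exists 0, y; split; rewrite ?add0r //; apply: I0.
  by exfalso; case: (max2 m1 I1 sub2) => E; [ apply: ne | apply: ne1 ].
have : S 1 by rewrite ES; apply: G1.
by move=> [x [y [? ? E]]]; exists x, y; split.
Qed.

Lemma comax_prod_r (J I1 I2 : pset) : is_ideal G J -> psubset I1 G -> psubset I2 G ->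
  comax J I1 -> comax J I2 -> comax J (sum_prods I1 I2).
Proof.
move=> HJ H1 H2 [y1 [x1 [Jy1 Ix1 E1]]] [y2 [x2 [Jy2 Ix2 E2]]].
exists (y1 * (x2 + y2) + x1 * y2), (x1 * x2); split.
- apply: ID => //; first by apply: IMr => //; rewrite addrC E2; apply: G1.
  by apply: IMl => //; apply: H1.
- exact: sp1.
- have -> : (1 : A) = (y1 + x1) * (x2 + y2) by rewrite (addrC x2) E1 E2 mulr1.
  rewrite [RHS]mulrDl [x1 * (_ + _)]mulrDr; rewrite -!addrA; congr (_ + _).
  by rewrite addrC.
Qed.

Lemma comaxW (B C : pset -> Prop) n1 n2 : is_class G R B -> is_class G R C -> B <> C ->
  inW G B n1 -> inW G C n2 -> comax n1 n2.
Proof.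
move=> HB HC BC [ms1 [H1 ->]] [ms2 [H2 ->]].
have HBi : forall m, B m -> is_ideal G m by move=> m; apply: class_ideal.
have HCi : forall m, C m -> is_ideal G m by move=> m; apply: class_ideal.
have step1 : forall m, B m -> comax m (ideal_prod G ms2).
  move=> m Bm; elim: ms2 H2 => [|m2 ms2 IH] /=.
    by move=> _; exists 0, 1; split; rewrite ?add0r //; [apply: (I0 (HBi _ Bm)) | apply: G1].
  move=> [Cm2 Hr]; apply: comax_prod_r.
  - exact: HBi.
  - exact: (I_sub (HCi _ Cm2)).
  - exact: (I_sub (ideal_prod_ideal HCi Hr)).
  - exact: (comax_max HB HC BC).
  - exact: IH.
apply: comax_sym.
elim: ms1 H1 => [|m1 ms1 IH] /=.
  by move=> _; exists 0, 1; split; rewrite ?add0r //; [apply: (I0 (ideal_prod_ideal HCi H2)) | apply: G1].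
move=> [Bm1 Hr]; apply: comax_prod_r.
- exact: (ideal_prod_ideal HCi H2).
- exact: (I_sub (HBi _ Bm1)).
- exact: (I_sub (ideal_prod_ideal HBi Hr)).
- by apply: comax_sym; apply: step1.
- exact: IH.
Qed.

End Ideals.

Section Blocks.
Variables (k : fieldType) (A : algType k).
Local Notation pset := (A -> Prop).
Variable G : pset.
Hypothesis HG : is_subalg G.
Variable R : pset -> pset -> Prop.
Hypothesis HR : equiv_on_cfs G R.
Variables (act : A -> A -> A) (mul : A -> A -> A).
Hypothesis mulE : (forall x y, mul x y = x * y) \/ (forall x y, mul x y = y * x).
Hypothesis actD : forall x a b, act x (a + b) = act x a + act x b.
Hypothesis actDl : forall x y a, act (x + y) a = act x a + act y a.
Hypothesis act1 : forall a, act 1 a = a.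
Hypothesis actA : forall x y a, act x (act y a) = act (mul x y) a.
Variable K : pset.
Hypothesis K0 : K 0.
Hypothesis KD : forall a b, K a -> K b -> K (a + b).
Hypothesis KN : forall a, K a -> K (- a).
Hypothesis Kact : forall x a, K a -> K (act x a).

Lemma act0 x : act x 0 = 0.
Proof. have h := actD x 0 0; rewrite addr0 in h.
by apply: (addrI (act x 0)); rewrite -h addr0. Qed.
Lemma actN x a : act x (- a) = - act x a.
Proof. by apply/eqP; rewrite -addr_eq0 -actD addNr act0. Qed.
Lemma actB x a b : act x (a - b) = act x a - act x b.
Proof. by rewrite actD actN. Qed.

Lemma mulI (I : pset) x y : is_ideal G I -> I x -> G y -> I (mul x y) /\ I (mul y x).
Proof. by move=> HI Ix Gy; case: mulE => E; rewrite !E; split; first [by apply: (IMr HI) | by apply: (IMl HI)]. Qed.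

Lemma mulG x y : G x -> G y -> G (mul x y).
Proof. by case: mulE => -> ? ?; apply: GM. Qed.

Lemma mul1B (I : pset) y1 y2 : is_ideal G I -> G y1 -> G y2 -> I (1 - y1) -> I (1 - y2) ->
  I (1 - mul y1 y2).
Proof.
move=> HI G1' G2' I1 I2; case: mulE => ->.
  have -> : 1 - y1 * y2 = (1 - y1) + y1 * (1 - y2) by rewrite mulrBr mulr1 subrKA.
  by apply: (ID HI) => //; apply: (IMl HI).
have -> : 1 - y2 * y1 = (1 - y2) + y2 * (1 - y1) by rewrite mulrBr mulr1 subrKA.
by apply: (ID HI) => //; apply: (IMl HI).
Qed.

Local Notation V := (Vblk G act K).

Lemma KB a b : K a -> K b -> K (a - b). Proof. by move=> *; apply: KD => //; apply: KN. Qed.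

Lemma V_K C a : K a -> V C a.
Proof. by move=> Ka; exists G; split; [apply: inW_G | move=> x _; apply: Kact]. Qed.

Lemma V_add C a b : is_class G R C -> V C a -> V C b -> V C (a + b).
Proof.
move=> HC [n1 [Hn1 K1]] [n2 [Hn2 K2]].
have [N [HN s1 s2]] := meetW HG HC Hn1 Hn2.
by exists N; split => // x Nx; rewrite actD; apply: KD; [apply: K1; apply: s1 | apply: K2; apply: s2].
Qed.

Lemma V_act C g a : is_class G R C -> G g -> V C a -> V C (act g a).
Proof.
move=> HC Gg [n [Hn Kn]]; exists n; split => // x nx; rewrite actA; apply: Kn.
by case: (mulI (inW_ideal HG HC Hn) nx Gg).
Qed.

Definition QJ (J : pset) z := exists u v, [/\ J u, K v & z = u + v].

Section J.
Variable J : pset.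
Hypothesis J0 : J 0.
Hypothesis JD : forall a b, J a -> J b -> J (a + b).

Lemma QJ0 : QJ J 0. Proof. by exists 0, 0; split; rewrite ?addr0. Qed.
Lemma QJD a b : QJ J a -> QJ J b -> QJ J (a + b).
Proof.
move=> [u1 [v1 [? ? ->]]] [u2 [v2 [? ? ->]]]; exists (u1 + u2), (v1 + v2).
by split; [apply: JD | apply: KD | rewrite addrACA].
Qed.
Lemma QJK a : K a -> QJ J a. Proof. by move=> Ka; exists 0, a; rewrite add0r. Qed.

Definition Good (nb : pset) z :=
  exists y, [/\ G y, nb (1 - y) & forall g, G g -> K (act y (act g z))].

Lemma Good0 nb : is_ideal G nb -> Good nb 0.
Proof.
move=> Hnb; exists 1; split; [exact: (G1 HG) | rewrite subrr; exact: (I0 Hnb) |].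
by move=> g _; rewrite act0 act0.
Qed.

Lemma GoodK nb z : is_ideal G nb -> K z -> Good nb z.
Proof.
move=> Hnb Kz; exists 1; split; [exact: (G1 HG) | rewrite subrr; exact: (I0 Hnb) |].
by move=> g _; do 2 apply: Kact.
Qed.

Lemma GoodD nb a b : is_ideal G nb -> Good nb a -> Good nb b -> Good nb (a + b).
Proof.
move=> Hnb [y1 [Gy1 n1 K1]] [y2 [Gy2 n2 K2]].
exists (mul y1 y2); split; [exact: mulG | exact: mul1B |].
move=> g Gg; rewrite actD actD; apply: KD.
  by rewrite -actA (actA y2); apply: K1; apply: mulG.
by rewrite -actA; apply: Kact; apply: K2.
Qed.

Lemma GoodKB nb z z1 : is_ideal G nb -> Good nb z1 -> K (z - z1) -> Good nb z.
Proof.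
move=> Hnb G1' Kz; have -> : z = z1 + (z - z1) by rewrite addrC subrK.
by apply: GoodD => //; apply: GoodK.
Qed.

Lemma Good_kill (C : pset -> Prop) nb b : is_class G R C -> inW G C nb ->
  (forall x, nb x -> K (act x b)) -> Good nb b -> K b.
Proof.
move=> HC Hnb Kb [y [Gy ny Ky]].
have -> : b = act (1 - y) b + act y b by rewrite -actDl subrK act1.
apply: KD; first exact: Kb.
by rewrite -{1}(act1 b); apply: Ky; apply: (G1 HG).
Qed.

Lemma Good_other (B C : pset -> Prop) nb w : is_class G R B -> is_class G R C -> B <> C ->
  inW G C nb -> V B w -> Good nb w.
Proof.
move=> HB HC BC Hnb [nw [Hnw Kw]].
have [x [y [nx ny E]]] := comaxW HG HR HC HB (nesym BC) Hnb Hnw.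
exists y; split.
- exact: (I_sub (inW_ideal HG HB Hnw)).
- by rewrite -E addrK.
- move=> g Gg; rewrite actA; apply: Kw.
  by case: (mulI (inW_ideal HG HB Hnw) ny Gg).
Qed.

Variables (C : pset -> Prop) (n1 N : pset).
Hypothesis HC : is_class G R C.
Hypothesis SB1 : forall a, exists (r : nat) (Bs : 'I_r -> pset -> Prop) (v : 'I_r -> A),
          (forall i, is_class G R (Bs i) /\ V (Bs i) (v i)) /\ K (a - \sum_(i < r) v i).
Hypothesis Hn1 : forall a, V C a -> forall x, n1 x -> K (act x a).
Hypothesis HN : inW G C N.
Hypothesis sN : psubset N n1.
Hypothesis Jin : forall x a, N x -> J (act x a).
Hypothesis Jind : forall S : pset, S 0 -> (forall a b, S a -> S b -> S (a + b)) ->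
  (forall x a, N x -> S (act x a)) -> forall z, J z -> S z.

Lemma block_surj a : exists b, V C b /\ QJ J (a - b).
Proof.
pose Reach z := exists b, V C b /\ QJ J (z - b).
have [r [Bs [v [Hv Ka]]]] := SB1 a.
have : Reach (\sum_(i < r) v i).
  apply: (big_ind Reach).
  - by exists 0; split; [apply: V_K | rewrite subrr; apply: QJ0].
  - move=> z1 z2 [b1 [V1 Q1]] [b2 [V2 Q2]]; exists (b1 + b2); split; first exact: V_add.
    by rewrite opprD addrACA; apply: QJD.
  - move=> i _; case: (Hv i) => HBi Vi.
    case: (classic (Bs i = C)) => E.
      by exists (v i); split; [rewrite -E | rewrite subrr; apply: QJ0].
    exists 0; split; first by apply: V_K.
    case: Vi => [nv [Hnv Kv]].
    have [x [y [Nx ny Exy]]] := comaxW HG HR HC HBi (nesym E) HN Hnv.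
    exists (act x (v i)), (act y (v i)); split; [exact: Jin | exact: Kv |].
    by rewrite -actDl Exy act1 subr0.
move=> [b [Vb Qb]]; exists b; split => //.
have -> : a - b = (a - \sum_(i < r) v i) + (\sum_(i < r) v i - b) by rewrite subrKA.
by apply: QJD => //; apply: QJK.
Qed.

Lemma block_inj b : V C b -> QJ J b -> K b.
Proof.
move=> Vb [u [w [Ju Kw Eb]]].
case: Vb => [nb [Hnb Kb]].
have Inb := inW_ideal HG HC Hnb.
apply: (Good_kill HC Hnb Kb).
rewrite Eb; apply: GoodD => //; last by apply: GoodK.
move: u Ju {Eb}; apply: Jind; [exact: Good0 | by move=> *; apply: GoodD |].
move=> x a Nx.
have [r [Bs [v [Hv Ka]]]] := SB1 a.
have Gx : G x by apply: (I_sub (inW_ideal HG HC HN)).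
apply: (GoodKB (z1 := act x (\sum_(i < r) v i))) => //; last first.
  by rewrite -actB; apply: Kact.
apply: (big_ind (fun s => Good nb (act x s))).
- by rewrite act0; apply: Good0.
- by move=> s1 s2 ? ?; rewrite actD; apply: GoodD.
- move=> i _; case: (Hv i) => HBi Vi.
  case: (classic (Bs i = C)) => E.
    apply: GoodK => //; apply: Hn1; first by rewrite -E.
    exact: sN.
  apply: (Good_other HBi HC E Hnb).
  exact: V_act.
Qed.

End J.
End Blocks.

Section Main.
Variables (k : fieldType) (A : algType k).
Local Notation pset := (A -> Prop).
Variable G : pset.
Hypothesis HG : is_subalg G.
Variable R : pset -> pset -> Prop.
Hypothesis HR : equiv_on_cfs G R.
Hypothesis HS : strong_HC G R.

Lemma Q0 (m n : pset) : Qmod m n 0.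
Proof. by exists 0, 0; split; [apply: rgen0 | split; [apply: lgen0 | rewrite addr0]]. Qed.
Lemma QD (m n : pset) x y : Qmod m n x -> Qmod m n y -> Qmod m n (x + y).
Proof.
move=> [u1 [v1 [? [? ->]]]] [u2 [v2 [? [? ->]]]]; exists (u1 + u2), (v1 + v2).
by split; [apply: rgenD | split; [apply: lgenD | rewrite addrACA]].
Qed.
Lemma QN (m n : pset) x : Qmod m n x -> Qmod m n (- x).
Proof.
move=> [u [v [? [? ->]]]]; exists (- u), (- v).
by split; [apply: rgenN | split; [apply: lgenN | rewrite opprD]].
Qed.
Lemma Qsym (m n : pset) x y : Qmod m n (x - y) -> Qmod m n (y - x).
Proof. by move/QN; rewrite opprB. Qed.
Lemma Qtele (m n : pset) x y z : Qmod m n (x - y) -> Qmod m n (y - z) -> Qmod m n (x - z).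
Proof. by move=> H1 H2; rewrite -(subrKA y); apply: QD. Qed.
Lemma Q_mono (m n m' n' : pset) z : psubset m m' -> psubset n n' -> Qmod m n z -> Qmod m' n' z.
Proof.
move=> sm sn [u [v [Hu [Hv ->]]]]; exists u, v; split; first exact: (rgen_mono sn).
by split => //; apply: (lgen_mono sm).
Qed.
Lemma Q_lgen (m n : pset) z : lgen m z -> Qmod m n z.
Proof. by move=> H; exists 0, z; split; [apply: rgen0 | split; rewrite ?add0r]. Qed.
Lemma Q_rgen (m n : pset) z : rgen n z -> Qmod m n z.
Proof. by move=> H; exists z, 0; split; [ | split; [apply: lgen0 | rewrite addr0]]. Qed.

Lemma QL_kill (m n l : pset) b x : (forall y, n y -> rgen l (b * y)) -> Qmod m n x ->
  Qmod m l (b * x).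
Proof.
move=> Hb [u [v [Hu [Hv ->]]]]; rewrite mulrDr; apply: QD; last first.
  by apply: Q_lgen; apply: lgenM.
apply: Q_rgen; move: u Hu.
apply: (sp_ind (S := fun u => rgen l (b * u))).
- by rewrite mulr0; apply: rgen0.
- by move=> ? ? ? ?; rewrite mulrDr; apply: rgenD.
- by move=> y a ny _; rewrite mulrA; apply: rgenM; apply: Hb.
Qed.

Lemma QR_kill (m n l : pset) a x : (forall y, n y -> lgen m (y * a)) -> Qmod n l x ->
  Qmod m l (x * a).
Proof.
move=> Ha [u [v [Hu [Hv ->]]]]; rewrite mulrDl; apply: QD.
  by apply: Q_rgen; apply: rgenM.
apply: Q_lgen; move: v Hv.
apply: (sp_ind (S := fun v => lgen m (v * a))).
- by rewrite mul0r; apply: lgen0.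
- by move=> ? ? ? ?; rewrite mulrDl; apply: lgenD.
- by move=> c y _ ny; rewrite -mulrA; apply: lgenM; apply: Ha.
Qed.

Lemma QMl (m n : pset) c x : is_ideal G n -> G c -> Qmod m n x -> Qmod m n (c * x).
Proof.
move=> In Gc [u [v [Hu [Hv ->]]]]; rewrite mulrDr; apply: QD.
  by apply: Q_rgen; apply: (rgenMG In).
by apply: Q_lgen; apply: lgenM.
Qed.
Lemma QMr (m n : pset) c x : is_ideal G m -> G c -> Qmod m n x -> Qmod m n (x * c).
Proof.
move=> Im Gc [u [v [Hu [Hv ->]]]]; rewrite mulrDl; apply: QD.
  by apply: Q_rgen; apply: rgenM.
by apply: Q_lgen; apply: (lgenMG Im).
Qed.

Local Notation lac := (@lact _ A).
Local Notation rac := (@ract _ A).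
Local Notation VL m C := (Vblk G (@lact _ A) (lgen m) C).
Local Notation VR l C := (Vblk G (@ract _ A) (rgen l) C).

Let mulEL : (forall x y : A, x * y = x * y) \/ (forall x y : A, x * y = y * x).
Proof. by left. Qed.
Let mulER : (forall x y : A, y * x = x * y) \/ (forall x y : A, y * x = y * x).
Proof. by right. Qed.
Let lactD x a b : lac x (a + b) = lac x a + lac x b. Proof. exact: mulrDr. Qed.
Let lactDl x y a : lac (x + y) a = lac x a + lac y a. Proof. exact: mulrDl. Qed.
Let lact1 a : lac 1 a = a. Proof. exact: mul1r. Qed.
Let lactA x y a : lac x (lac y a) = lac (x * y) a. Proof. exact: mulrA. Qed.
Let ractD x a b : rac x (a + b) = rac x a + rac x b. Proof. exact: mulrDl. Qed.
Let ractDl x y a : rac (x + y) a = rac x a + rac y a. Proof. exact: mulrDr. Qed.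
Let ract1 a : rac 1 a = a. Proof. exact: mulr1. Qed.
Let ractA x y a : rac x (rac y a) = rac ((fun x y => y * x) x y) a.
Proof. by rewrite /rac /ract -mulrA. Qed.

Lemma VL_act (m : pset) C g a : is_class G R C -> G g -> VL m C a -> VL m C (g * a).
Proof.
move=> HC Gg Va; apply: (V_act HG mulEL lactA (K := lgen m) HC Gg Va).
Qed.
Lemma VR_act (l : pset) C g a : is_class G R C -> G g -> VR l C a -> VR l C (a * g).
Proof.
move=> HC Gg Va; apply: (V_act HG mulER ractA (K := rgen l) HC Gg Va).
Qed.
Lemma VL_add (m : pset) C a b : is_class G R C -> VL m C a -> VL m C b -> VL m C (a + b).
Proof. by move=> HC; apply: (V_add HG lactD (@lgenD _ _ m) HC). Qed.
Lemma VR_add (l : pset) C a b : is_class G R C -> VR l C a -> VR l C b -> VR l C (a + b).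
Proof. by move=> HC; apply: (V_add HG ractD (@rgenD _ _ l) HC). Qed.

Lemma VL_rmul (m : pset) C c a : is_ideal G m -> G c -> VL m C a -> VL m C (a * c).
Proof.
move=> Im Gc [n [Hn Kn]]; exists n; split => // x nx; rewrite /lac /lact mulrA.
by apply: (lgenMG Im) => //; apply: Kn.
Qed.
Lemma VR_lmul (l : pset) C c a : is_ideal G l -> G c -> VR l C a -> VR l C (c * a).
Proof.
move=> Il Gc [n [Hn Kn]]; exists n; split => // x nx; rewrite /rac /ract -mulrA.
by apply: (rgenMG Il) => //; apply: Kn.
Qed.

Lemma killL (m : pset) C n b x : is_class G R C -> inW G C n -> proj_bij_left G C m n ->
  VL m C b -> n x -> lgen m (x * b).
Proof.
move=> HC Hn [_ inj] Vb nx; apply: inj.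
  by apply: VL_act => //; apply: (I_sub (inW_ideal HG HC Hn)).
by apply: Q_rgen; apply: rgen1.
Qed.
Lemma killR (l : pset) C n b x : is_class G R C -> inW G C n -> proj_bij_right G C l n ->
  VR l C b -> n x -> rgen l (b * x).
Proof.
move=> HC Hn [_ inj] Vb nx; apply: inj.
  by apply: VR_act => //; apply: (I_sub (inW_ideal HG HC Hn)).
by apply: Q_lgen; apply: lgen1.
Qed.

Lemma EXL (B C : pset -> Prop) m : is_class G R B -> inW G B m -> is_class G R C ->
  exists n1, inW G C n1 /\ forall N, inW G C N -> psubset N n1 -> proj_bij_left G C m N.
Proof.
move=> HB Hm HC; have [[SB1 _ SB3] _] := HS HB Hm.
have [n1 [Hn1 K1]] := SB3 C HC.
exists n1; split => // N HN sN.
have Jin : forall x a, N x -> rgen N (lac x a) by move=> x a Nx; apply: rgen1.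
have Jind : forall S : pset, S 0 -> (forall a b, S a -> S b -> S (a + b)) ->
    (forall x a, N x -> S (lac x a)) -> forall z, rgen N z -> S z.
  by move=> S S0 SD Sx; apply: sp_ind => // x y Nx _; apply: Sx.
have H := block_surj HG HR lactD lactDl lact1 (@lgen0 _ _ m) (@lgenD _ _ m)
  (fun x a => @lgenM _ _ m x a) (@rgen0 _ _ N) (@rgenD _ _ N) HC SB1 HN Jin.
have H' := block_inj HG HR mulEL lactD lactDl lact1 lactA (@lgen0 _ _ m) (@lgenD _ _ m)
  (fun x a => @lgenM _ _ m x a) HC SB1 K1 HN sN Jind.
split.
  move=> a; have [b [Vb [u [v [Hu Hv E]]]]] := H a.
  by exists b; split => //; exists u, v.
move=> b Vb [u [v [Hu [Hv E]]]]; apply: H' => //.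
by exists u, v.
Qed.



Lemma EXR (D C : pset -> Prop) l : is_class G R D -> inW G D l -> is_class G R C ->
  exists n2, inW G C n2 /\ forall N, inW G C N -> psubset N n2 -> proj_bij_right G C l N.
Proof.
move=> HD Hl HC; have [_ [SB1 _ SB3]] := HS HD Hl.
have [n2 [Hn2 K2]] := SB3 C HC.
exists n2; split => // N HN sN.
have Jin : forall x a, N x -> lgen N (rac x a) by move=> x a Nx; apply: lgen1.
have Jind : forall S : pset, S 0 -> (forall a b, S a -> S b -> S (a + b)) ->
    (forall x a, N x -> S (rac x a)) -> forall z, lgen N z -> S z.
  by move=> S S0 SD Sx; apply: sp_ind => // x y _ Ny; apply: Sx.
have H := block_surj HG HR ractD ractDl ract1 (@rgen0 _ _ l) (@rgenD _ _ l)
  (fun x a => @rgenM _ _ l x a) (@lgen0 _ _ N) (@lgenD _ _ N) HC SB1 HN Jin.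
have H' := block_inj HG HR mulER ractD ractDl ract1 ractA (@rgen0 _ _ l) (@rgenD _ _ l)
  (fun x a => @rgenM _ _ l x a) HC SB1 K2 HN sN Jind.
split.
  move=> a; have [b [Vb [u [v [Hu Hv E]]]]] := H a.
  by exists b; split => //; exists v, u; split => //; split => //; rewrite E addrC.
move=> b Vb [u [v [Hu [Hv E]]]]; apply: H' => //.
by exists v, u; split => //; rewrite E addrC.
Qed.

Lemma EX (B C D : pset -> Prop) m l : is_class G R B -> is_class G R C -> is_class G R D ->
  inW G B m -> inW G D l ->
  exists N0, inW G C N0 /\ forall N, inW G C N -> psubset N N0 ->
    proj_bij_left G C m N /\ proj_bij_right G C l N.
Proof.
move=> HB HC HD Hm Hl.
have [n1 [Hn1 P1]] := EXL HB Hm HC.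
have [n2 [Hn2 P2]] := EXR HD Hl HC.
have [N0 [HN0 s1 s2]] := meetW HG HC Hn1 Hn2.
exists N0; split => // N HN sN; split.
  by apply: P1 => // x /sN; apply: s1.
by apply: P2 => // x /sN; apply: s2.
Qed.

Lemma adm_of (C : pset -> Prop) (f g : hcfam A) m l N : inW G C N ->
  proj_bij_left G C m N -> proj_bij_right G C l N ->
  exists a b, admissible G C f g m l N a b.
Proof.
move=> HN PL PR.
have [a [Va Qa]] := PL.1 (f m N).
have [b [Vb Qb]] := PR.1 (g N l).
by exists a, b; split.
Qed.

Definition compf (C : pset -> Prop) (g f : hcfam A) : hcfam A := fun m l =>
  match excluded_middle_informative
    (exists t : pset * A * A, admissible G C f g m l t.1.1 t.1.2 t.2) with
  | left H => let t := proj1_sig (constructive_indefinite_description _ H) in t.2 * t.1.2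
  | right _ => 0
  end.

Lemma WD (B C D : pset -> Prop) (f g : hcfam A) m l n a b n' a' b' :
  is_class G R B -> is_class G R C -> is_class G R D ->
  in_lim G B C f -> in_lim G C D g -> inW G B m -> inW G D l ->
  admissible G C f g m l n a b -> admissible G C f g m l n' a' b' ->
  Qmod m l (b * a - b' * a').
Proof.
move=> HB HC HD Hf Hg Hm Hl [Hn PR PL [Qa Va] [Qb Vb]] [Hn' PR' PL' [Qa' Va'] [Qb' Vb']].
have [N [HN sN sN']] := meetW HG HC Hn Hn'.
have X1 : Qmod m n (a - f m N).
  apply: (Qtele (y := f m n)); first exact: Qsym.
  by apply: Qsym; apply: Hf.
have X2 : Qmod m n' (f m N - a').
  by apply: (Qtele (y := f m n')) => //; apply: Hf.
have Y1 : Qmod n l (b - g N l).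
  apply: (Qtele (y := g n l)); first exact: Qsym.
  by apply: Qsym; apply: Hg.
have Y2 : Qmod n' l (g N l - b').
  by apply: (Qtele (y := g n' l)) => //; apply: Hg.
have -> : b * a - b' * a' = b * (a - f m N) + b * (f m N - a') +
   ((b - g N l) * a' + (g N l - b') * a').
  by rewrite -mulrDr -mulrDl !subrKA mulrBr mulrBl subrKA.
apply: QD; apply: QD.
- by apply: (QL_kill _ X1) => y ny; apply: (killR HC Hn PR Vb).
- by apply: (QL_kill _ X2) => y ny; apply: (killR HC Hn' PR' Vb).
- by apply: (QR_kill _ Y1) => y ny; apply: (killL HC Hn PL Va').
- by apply: (QR_kill _ Y2) => y ny; apply: (killL HC Hn' PL' Va').
Qed.

Lemma comp_eq (B C D : pset -> Prop) (f g : hcfam A) m l n a b :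
  is_class G R B -> is_class G R C -> is_class G R D ->
  in_lim G B C f -> in_lim G C D g -> inW G B m -> inW G D l ->
  admissible G C f g m l n a b -> Qmod m l (compf C g f m l - b * a).
Proof.
move=> HB HC HD Hf Hg Hm Hl Ha; rewrite /compf.
case: excluded_middle_informative => [H|H]; last first.
  by exfalso; apply: H; exists (n, a, b).
case: (constructive_indefinite_description _ H) => [[[n' a'] b'] /= Ht].
exact: (WD HB HC HD Hf Hg Hm Hl Ht Ha).
Qed.

Lemma comp_lim (B C D : pset -> Prop) (f g : hcfam A) :
  is_class G R B -> is_class G R C -> is_class G R D ->
  in_lim G B C f -> in_lim G C D g -> in_lim G B D (compf C g f).
Proof.
move=> HB HC HD Hf Hg m m' l l' Hm Hm' Hl Hl' sm sl.
have [N1 [HN1 P1]] := EX HB HC HD Hm Hl.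
have [N2 [HN2 P2]] := EX HB HC HD Hm' Hl'.
have [N [HN s1 s2]] := meetW HG HC HN1 HN2.
have [PL PR] := P1 N HN s1.
have [PL' PR'] := P2 N HN s2.
have [a [b Ad]] := adm_of f g HN PL PR.
have [a' [b' Ad']] := adm_of f g HN PL' PR'.
have E := comp_eq HB HC HD Hf Hg Hm Hl Ad.
have E' := comp_eq HB HC HD Hf Hg Hm' Hl' Ad'.
case: Ad => _ _ _ [Qa Va] [Qb Vb].
case: Ad' => _ _ _ [Qa' Va'] [Qb' Vb'].
apply: (Qtele (y := b' * a')).
  by apply: (Q_mono sm sl).
apply: (Qtele (y := b * a)); last exact: Qsym.
have X : Qmod m N (a' - a).
  apply: (Qtele (y := f m' N)).
    by apply: (Q_mono sm (fun x (h : N x) => h)); apply: Qsym.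
  by apply: (Qtele (y := f m N)) => //; apply: Hf.
have Y : Qmod N l (b' - b).
  apply: (Qtele (y := g N l')).
    by apply: (Q_mono (fun x (h : N x) => h) sl); apply: Qsym.
  by apply: (Qtele (y := g N l)) => //; apply: Hg.
have -> : b' * a' - b * a = b' * (a' - a) + (b' - b) * a.
  by rewrite mulrBr mulrBl subrKA.
apply: QD.
  apply: (QL_kill _ X) => y ny; apply: (rgen_mono sl).
  exact: (killR HC HN PR' Vb').
by apply: (QR_kill _ Y) => y ny; apply: (killL HC HN PL Va).
Qed.



Lemma lim_add (B C : pset -> Prop) (f f' : hcfam A) :
  in_lim G B C f -> in_lim G B C f' -> in_lim G B C (fam_add f f').
Proof.
move=> Hf Hf' m m' n n' Hm Hm' Hn Hn' sm sn; rewrite /fam_add opprD addrACA.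
by apply: QD; [apply: Hf | apply: Hf'].
Qed.
Lemma lim_lmul (B C : pset -> Prop) c (f : hcfam A) : is_class G R C -> G c ->
  in_lim G B C f -> in_lim G B C (fam_lmul c f).
Proof.
move=> HC Gc Hf m m' n n' Hm Hm' Hn Hn' sm sn; rewrite /fam_lmul -mulrBr.
by apply: QMl => //; [apply: (inW_ideal HG HC Hn) | apply: Hf].
Qed.
Lemma lim_rmul (B C : pset -> Prop) c (f : hcfam A) : is_class G R B -> G c ->
  in_lim G B C f -> in_lim G B C (fam_rmul f c).
Proof.
move=> HB Gc Hf m m' n n' Hm Hm' Hn Hn' sm sn; rewrite /fam_rmul -mulrBl.
by apply: QMr => //; [apply: (inW_ideal HG HB Hm) | apply: Hf].
Qed.
Lemma lim_cst (B C : pset -> Prop) c : in_lim G B C (fam_cst c).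
Proof. by move=> *; rewrite /fam_cst subrr; apply: Q0. Qed.

Let sref (P : pset) : psubset P P. Proof. by []. Qed.

Section Cls.
Variables (B C D : pset -> Prop).
Hypotheses (HB : is_class G R B) (HC : is_class G R C) (HD : is_class G R D).

Lemma resp (f f' g g' : hcfam A) : in_lim G B C f -> in_lim G B C f' -> in_lim G C D g ->
  in_lim G C D g' -> lim_eq G B C f f' -> lim_eq G C D g g' ->
  lim_eq G B D (compf C g f) (compf C g' f').
Proof.
move=> Hf Hf' Hg Hg' Ef Eg m l Hm Hl.
have [N [HN P]] := EX HB HC HD Hm Hl; have [PL PR] := P N HN (fun x (h : N x) => h).
have [a [b Ad]] := adm_of f g HN PL PR.
have E1 := comp_eq HB HC HD Hf Hg Hm Hl Ad.
case: Ad => _ _ _ [Qa Va] [Qb Vb].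
have Ad' : admissible G C f' g' m l N a b.
  split => //; split => //.
    by apply: (Qtele (y := f m N)) => //; apply: Qsym; apply: Ef.
  by apply: (Qtele (y := g N l)) => //; apply: Qsym; apply: Eg.
have E2 := comp_eq HB HC HD Hf' Hg' Hm Hl Ad'.
by apply: (Qtele (y := b * a)) => //; apply: Qsym.
Qed.

Lemma addL (f g g' : hcfam A) : in_lim G B C f -> in_lim G C D g -> in_lim G C D g' ->
  lim_eq G B D (compf C (fam_add g g') f) (fam_add (compf C g f) (compf C g' f)).
Proof.
move=> Hf Hg Hg' m l Hm Hl.
have [N [HN P]] := EX HB HC HD Hm Hl; have [PL PR] := P N HN (fun x (h : N x) => h).
have [a [b Ad]] := adm_of f g HN PL PR.
have E1 := comp_eq HB HC HD Hf Hg Hm Hl Ad.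
case: Ad => _ _ _ [Qa Va] [Qb Vb].
have [b' [Vb' Qb']] := PR.1 (g' N l).
have Ad2 : admissible G C f g' m l N a b' by split.
have E2 := comp_eq HB HC HD Hf Hg' Hm Hl Ad2.
have Ad3 : admissible G C f (fam_add g g') m l N a (b + b').
  split => //; split; last exact: VR_add.
  by rewrite /fam_add opprD addrACA; apply: QD.
have E3 := comp_eq HB HC HD Hf (lim_add Hg Hg') Hm Hl Ad3.
apply: (Qtele (y := b * a + b' * a)); first by rewrite -mulrDl.
rewrite /fam_add opprD addrACA; apply: QD; exact: Qsym.
Qed.

Lemma addR (f f' g : hcfam A) : in_lim G B C f -> in_lim G B C f' -> in_lim G C D g ->
  lim_eq G B D (compf C g (fam_add f f')) (fam_add (compf C g f) (compf C g f')).
Proof.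
move=> Hf Hf' Hg m l Hm Hl.
have [N [HN P]] := EX HB HC HD Hm Hl; have [PL PR] := P N HN (fun x (h : N x) => h).
have [a [b Ad]] := adm_of f g HN PL PR.
have E1 := comp_eq HB HC HD Hf Hg Hm Hl Ad.
case: Ad => _ _ _ [Qa Va] [Qb Vb].
have [a' [Va' Qa']] := PL.1 (f' m N).
have Ad2 : admissible G C f' g m l N a' b by split.
have E2 := comp_eq HB HC HD Hf' Hg Hm Hl Ad2.
have Ad3 : admissible G C (fam_add f f') g m l N (a + a') b.
  split => //; split; last exact: VL_add.
  by rewrite /fam_add opprD addrACA; apply: QD.
have E3 := comp_eq HB HC HD (lim_add Hf Hf') Hg Hm Hl Ad3.
apply: (Qtele (y := b * a + b * a')); first by rewrite -mulrDr.
rewrite /fam_add opprD addrACA; apply: QD; exact: Qsym.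
Qed.

Lemma lmulL c (f g : hcfam A) : G c -> in_lim G B C f -> in_lim G C D g ->
  lim_eq G B D (compf C (fam_lmul c g) f) (fam_lmul c (compf C g f)).
Proof.
move=> Gc Hf Hg m l Hm Hl.
have [N [HN P]] := EX HB HC HD Hm Hl; have [PL PR] := P N HN (fun x (h : N x) => h).
have [a [b Ad]] := adm_of f g HN PL PR.
have E1 := comp_eq HB HC HD Hf Hg Hm Hl Ad.
case: Ad => _ _ _ [Qa Va] [Qb Vb].
have Il := inW_ideal HG HD Hl.
have Ad3 : admissible G C f (fam_lmul c g) m l N a (c * b).
  split => //; split; last exact: VR_lmul.
  by rewrite /fam_lmul -mulrBr; apply: QMl.
have E3 := comp_eq HB HC HD Hf (lim_lmul HD Gc Hg) Hm Hl Ad3.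
apply: (Qtele (y := (c * b) * a)) => //.
by rewrite /fam_lmul -mulrA -mulrBr; apply: QMl => //; apply: Qsym.
Qed.

Lemma balanced c (f g : hcfam A) : G c -> in_lim G B C f -> in_lim G C D g ->
  lim_eq G B D (compf C (fam_rmul g c) f) (compf C g (fam_lmul c f)).
Proof.
move=> Gc Hf Hg m l Hm Hl.
have [N [HN P]] := EX HB HC HD Hm Hl; have [PL PR] := P N HN (fun x (h : N x) => h).
have [a [b Ad]] := adm_of f g HN PL PR.
case: Ad => _ _ _ [Qa Va] [Qb Vb].
have IN := inW_ideal HG HC HN.
have Ad1 : admissible G C f (fam_rmul g c) m l N a (b * c).
  split => //; split; last exact: VR_act.
  by rewrite /fam_rmul -mulrBl; apply: QMr.
have Ad2 : admissible G C (fam_lmul c f) g m l N (c * a) b.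
  split => //; split; last exact: VL_act.
  by rewrite /fam_lmul -mulrBr; apply: QMl.
have E1 := comp_eq HB HC HD Hf (lim_rmul HC Gc Hg) Hm Hl Ad1.
have E2 := comp_eq HB HC HD (lim_lmul HC Gc Hf) Hg Hm Hl Ad2.
apply: (Qtele (y := (b * c) * a)) => //.
by rewrite -mulrA; apply: Qsym.
Qed.

Lemma rmulR c (f g : hcfam A) : G c -> in_lim G B C f -> in_lim G C D g ->
  lim_eq G B D (compf C g (fam_rmul f c)) (fam_rmul (compf C g f) c).
Proof.
move=> Gc Hf Hg m l Hm Hl.
have [N [HN P]] := EX HB HC HD Hm Hl; have [PL PR] := P N HN (fun x (h : N x) => h).
have [a [b Ad]] := adm_of f g HN PL PR.
have E1 := comp_eq HB HC HD Hf Hg Hm Hl Ad.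
case: Ad => _ _ _ [Qa Va] [Qb Vb].
have Im := inW_ideal HG HB Hm.
have Ad3 : admissible G C (fam_rmul f c) g m l N (a * c) b.
  split => //; split; last exact: VL_rmul.
  by rewrite /fam_rmul -mulrBl; apply: QMr.
have E3 := comp_eq HB HC HD (lim_rmul HB Gc Hf) Hg Hm Hl Ad3.
apply: (Qtele (y := b * (a * c))) => //.
by rewrite /fam_rmul mulrA -mulrBl; apply: QMr => //; apply: Qsym.
Qed.

End Cls.


Lemma assoc (B C D E : pset -> Prop) (f g h : hcfam A) :
  is_class G R B -> is_class G R C -> is_class G R D -> is_class G R E ->
  in_lim G B C f -> in_lim G C D g -> in_lim G D E h ->
  lim_eq G B E (compf C (compf D h g) f) (compf D h (compf C g f)).
Proof.
move=> HB HC HD HE Hf Hg Hh m e Hm He.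
have HGl := comp_lim HC HD HE Hg Hh.
have GFl := comp_lim HB HC HD Hf Hg.
have [ND [HND PD]] := EX HB HD HE Hm He.
have [PLD PRD] := PD ND HND (fun x (h : ND x) => h).
have [NC1 [HNC1 PC1]] := EX HB HC HE Hm He.
have [NC2 [HNC2 PC2]] := EX HB HC HD Hm HND.
have [NC [HNC s1 s2]] := meetW HG HC HNC1 HNC2.
have [PLC PRCe] := PC1 NC HNC s1.
have [_ PRCd] := PC2 NC HNC s2.
have [ND1 [HND1 PD1]] := EX HC HD HE HNC He.
have [ND' [HND' t1 t2]] := meetW HG HD HND1 HND.
have [PLD' PRD'] := PD1 ND' HND' t1.
have [a [Va Qa]] := PLC.1 (f m NC).
have [bg [Vbg Qbg]] := PRCd.1 (g NC ND).
have E1 : Qmod m ND (compf C g f m ND - bg * a).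
  by apply: (comp_eq (n := NC) HB HC HD Hf Hg Hm HND); split.
have [a' [Va' Qa']] := PLD.1 (compf C g f m ND).
have [b' [Vb' Qb']] := PRD.1 (h ND e).
have E2 : Qmod m e (compf D h (compf C g f) m e - b' * a').
  by apply: (comp_eq (n := ND) HB HD HE GFl Hh Hm He); split.
have [ag [Vag Qag]] := PLD'.1 (g NC ND').
have [bh [Vbh Qbh]] := PRD'.1 (h ND' e).
have E3 : Qmod NC e (compf D h g NC e - bh * ag).
  by apply: (comp_eq (n := ND') HC HD HE Hg Hh HNC He); split.
have [b [Vb Qb]] := PRCe.1 (compf D h g NC e).
have E4 : Qmod m e (compf C (compf D h g) f m e - b * a).
  by apply: (comp_eq (n := NC) HB HC HE Hf HGl Hm He); split.
have kA : forall y, NC y -> lgen m (y * a) by move=> y ny; apply: (killL HC HNC PLC Va).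
have kbh : forall y, ND y -> rgen e (bh * y) by move=> y ny; apply: (killR HD HND PRD Vbh).
apply: (Qtele (y := b * a)) => //.
apply: (Qtele (y := (bh * ag) * a)).
  rewrite -mulrBl; apply: (QR_kill kA).
  by apply: (Qtele (y := compf D h g NC e)) => //; apply: Qsym.
apply: (Qtele (y := b' * a')); last exact: Qsym.
have -> : bh * ag * a - b' * a' = bh * ((ag - bg) * a) + bh * (bg * a - a') + (bh - b') * a'.
  by rewrite -mulrDr mulrBl subrKA mulrBr mulrBl subrKA mulrA.
apply: QD; first apply: QD.
- rewrite mulrA; apply: (QR_kill kA); apply: (QL_kill kbh).
  apply: (Qtele (y := g NC ND')).
    by apply: (Q_mono (fun x (h : NC x) => h) t2); apply: Qsym.
  apply: (Qtele (y := g NC ND)) => //.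
  by apply: Hg => //.
- apply: (QL_kill kbh); apply: (Qtele (y := compf C g f m ND)) => //.
  exact: Qsym.
- apply: (QR_kill (n := ND)); first by move=> y ny; apply: (killL HD HND PLD Va').
  apply: (Qtele (y := h ND' e)).
    by apply: (Q_mono t2 (fun x (h : e x) => h)); apply: Qsym.
  by apply: (Qtele (y := h ND e)) => //; apply: Hh.
Qed.

Lemma unitL (B C : pset -> Prop) c (f : hcfam A) :
  is_class G R B -> is_class G R C -> G c -> in_lim G B C f ->
  lim_eq G B C (fam_lmul c f) (compf C (fam_cst c) f).
Proof.
move=> HB HC Gc Hf m n Hm Hn.
have [N0 [HN0 P]] := EX HB HC HC Hm Hn.
have [N [HN s1 s2]] := meetW HG HC HN0 Hn.
have [PL PR] := P N HN s1.
have [a [b Ad]] := adm_of f (fam_cst c) HN PL PR.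
have E := comp_eq HB HC HC Hf (lim_cst (B:=C) (C:=C) c) Hm Hn Ad.
case: Ad => _ _ _ [Qa Va] [Qb Vb].
apply: (Qtele (y := c * a)).
  rewrite /fam_lmul -mulrBr; apply: QMl => //; first exact: (inW_ideal HG HC Hn).
  apply: (Qtele (y := f m N)).
    by apply: Qsym; apply: Hf.
  by apply: (Q_mono (fun x (h : m x) => h) s2).
apply: (Qtele (y := b * a)); last exact: Qsym.
rewrite -mulrBl; apply: (QR_kill (n := N)); first by move=> y ny; apply: (killL HC HN PL Va).
exact: Qb.
Qed.

Lemma unitR (B C : pset -> Prop) c (f : hcfam A) :
  is_class G R B -> is_class G R C -> G c -> in_lim G B C f ->
  lim_eq G B C (fam_rmul f c) (compf B f (fam_cst c)).
Proof.
move=> HB HC Gc Hf m n Hm Hn.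
have [N0 [HN0 P]] := EX HB HB HC Hm Hn.
have [N [HN s1 s2]] := meetW HG HB HN0 Hm.
have [PL PR] := P N HN s1.
have [a [b Ad]] := adm_of (fam_cst c) f HN PL PR.
have E := comp_eq HB HB HC (lim_cst (B:=B) (C:=B) c) Hf Hm Hn Ad.
case: Ad => _ _ _ [Qa Va] [Qb Vb].
apply: (Qtele (y := b * c)).
  rewrite /fam_rmul -mulrBl; apply: QMr => //; first exact: (inW_ideal HG HB Hm).
  apply: (Qtele (y := f N n)).
    by apply: Qsym; apply: Hf.
  by apply: (Q_mono s2 (fun x (h : n x) => h)).
apply: (Qtele (y := b * a)); last exact: Qsym.
rewrite -mulrBr; apply: (QL_kill (n := N)); first by move=> y ny; apply: (killR HB HN PR Vb).
exact: Qa.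
Qed.

End Main.

Theorem mainTheorem14 (k : fieldType) (A : algType k) (G : A -> Prop)
    (R : (A -> Prop) -> (A -> Prop) -> Prop) :
  is_subalg G -> equiv_on_cfs G R -> strong_HC G R ->
  exists comp : ((A -> Prop) -> Prop) -> ((A -> Prop) -> Prop) -> ((A -> Prop) -> Prop) ->
                hcfam A -> hcfam A -> hcfam A,
  forall B C D E : (A -> Prop) -> Prop,
    is_class G R B -> is_class G R C -> is_class G R D -> is_class G R E ->
  (forall f g, in_lim G B C f -> in_lim G C D g ->
     in_lim G B D (comp B C D g f) /\ comp_spec G B C D f g (comp B C D g f)) /\
  (forall f f' g g', in_lim G B C f -> in_lim G B C f' -> in_lim G C D g -> in_lim G C D g' ->
     lim_eq G B C f f' -> lim_eq G C D g g' ->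
     lim_eq G B D (comp B C D g f) (comp B C D g' f')) /\
  (forall f f' g g', in_lim G B C f -> in_lim G B C f' -> in_lim G C D g -> in_lim G C D g' ->
     lim_eq G B D (comp B C D (fam_add g g') f) (fam_add (comp B C D g f) (comp B C D g' f)) /\
     lim_eq G B D (comp B C D g (fam_add f f')) (fam_add (comp B C D g f) (comp B C D g f'))) /\
  (forall (c : A) f g, G c -> in_lim G B C f -> in_lim G C D g ->
     lim_eq G B D (comp B C D (fam_lmul c g) f) (fam_lmul c (comp B C D g f)) /\
     lim_eq G B D (comp B C D (fam_rmul g c) f) (comp B C D g (fam_lmul c f)) /\
     lim_eq G B D (comp B C D g (fam_rmul f c)) (fam_rmul (comp B C D g f) c)) /\
  (forall f g h, in_lim G B C f -> in_lim G C D g -> in_lim G D E h ->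
     lim_eq G B E (comp B C E (comp C D E h g) f) (comp B D E h (comp B C D g f))) /\
  (forall (c : A) f, G c -> in_lim G B C f ->
     lim_eq G B C (fam_lmul c f) (comp B C C (fam_cst c) f) /\
     lim_eq G B C (fam_rmul f c) (comp B B C f (fam_cst c))) /\
  in_lim G B B (fam_cst 1) /\
  (forall f, in_lim G B C f ->
     lim_eq G B C (comp B C C (fam_cst 1) f) f /\
     lim_eq G B C (comp B B C f (fam_cst 1)) f).
Proof.
move=> HG HR HS.
exists (fun B C D g f => compf G C g f).
move=> B C D E HB HC HD HE.
split.
  move=> f g Hf Hg; split; first exact: (comp_lim HG HR HS HB HC HD Hf Hg).
  move=> m l Hm Hl; split.
    have [N [HN P]] := EX HG HR HS HB HC HD Hm Hl.
    have [PL PR] := P N HN (fun x (h : N x) => h).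
    have [a [b Ad]] := adm_of f g HN PL PR.
    by exists N, a, b.
  by move=> n a b Ad; apply: (comp_eq HG HB HC HD Hf Hg Hm Hl Ad).
split.
  by move=> f f' g g' Hf Hf' Hg Hg' Ef Eg; apply: (resp HG HR HS HB HC HD Hf Hf' Hg Hg' Ef Eg).
split.
  move=> f f' g g' Hf Hf' Hg Hg'; split.
    exact: (addL HG HR HS HB HC HD Hf Hg Hg').
  exact: (addR HG HR HS HB HC HD Hf Hf' Hg).
split.
  move=> c f g Gc Hf Hg; split; first exact: (lmulL HG HR HS HB HC HD Gc Hf Hg).
  split; first exact: (balanced HG HR HS HB HC HD Gc Hf Hg).
  exact: (rmulR HG HR HS HB HC HD Gc Hf Hg).
split.
  by move=> f g h Hf Hg Hh; apply: (assoc HG HR HS HB HC HD HE Hf Hg Hh).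
split.
  move=> c f Gc Hf; split; first exact: (unitL HG HR HS HB HC Gc Hf).
  exact: (unitR HG HR HS HB HC Gc Hf).
split; first exact: lim_cst.
have G1' : G 1 by case: HG.
move=> f Hf; split.
  move=> m n Hm Hn; have := unitL HG HR HS HB HC G1' Hf Hm Hn.
  by rewrite /fam_lmul mul1r => H; apply: Qsym.
move=> m n Hm Hn; have := unitR HG HR HS HB HC G1' Hf Hm Hn.
by rewrite /fam_rmul mulr1 => H; apply: Qsym.
Qed.
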